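(* Fix $p$ with $0<p<1$ and for each positive integer $d$ define $\theta(d)=\dfrac{p}{d-(d-1)p}$. For $\mathbf{U}\in\mathbb{R}^{m\times d}$, $\mathbf{V}\in\mathbb{R}^{n\times d}$ with columns $\mathbf{u}_k,\mathbf{v}_k$, let $\Omega_{\mathrm{dropout}}(\mathbf{U},\mathbf{V})=\sum_{k=1}^d\|\mathbf{u}_k\|_2^2\|\mathbf{v}_k\|_2^2$. Define, for $\mathbf{X}\in\mathbb{R}^{m\times n}$, $$\Lambda(\mathbf{X})=\inf_{d,\mathbf{U},\mathbf{V}}\ \frac{1-\theta(d)}{\theta(d)}\,\Omega_{\mathrm{dropout}}(\mathbf{U},\mathbf{V})\quad\text{subject to } d\ge\operatorname{rank}(\mathbf{X}),\ \mathbf{U}\in\mathbb{R}^{m\times d},\ \mathbf{V}\in\mathbb{R}^{n\times d},\ \mathbf{U}\mathbf{V}^\top=\mathbf{X}.$$ Then the lower convex envelope of $\Lambda$ is $\mathbf{X}\mapsto\frac{1-p}{p}\|\mathbf{X}\|_\star^2$.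
   Context: $\|\mathbf{X}\|_\star$ is the nuclear norm (sum of singular values). The lower convex envelope of a function $f$ is the pointwise supremum of all convex functions $g$ with $g\le f$. $\|\cdot\|_2$ is the Euclidean norm. *)

(* Defs.v *)
From HB Require Import structures.
From Stdlib Require Import ClassicalEpsilon.
From mathcomp Require Import all_boot all_order all_algebra.
From mathcomp Require Import boolp classical_sets reals.
Set Implicit Arguments. Unset Strict Implicit. Unset Printing Implicit Defensive.
Import Order.TTheory GRing.Theory Num.Theory.
Local Open Scope ring_scope.
Local Open Scope classical_set_scope.

Definition theta (R : realType) (p : R) (d : nat) : R :=
  p / (d%:R - (d.-1)%:R * p).

Definition Omega_dropout (R : realType) (m n d : nat)
  (U : 'M[R]_(m, d)) (V : 'M[R]_(n, d)) : R :=
  \sum_(k < d) ((\sum_(i < m) U i k ^+ 2) * (\sum_(j < n) V j k ^+ 2)).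

Definition Lambda (R : realType) (p : R) (m n : nat) (X : 'M[R]_(m, n)) : R :=
  inf [set r : R | exists (d : nat) (U : 'M[R]_(m, d)) (V : 'M[R]_(n, d)),
        [/\ (0 < d)%N, (\rank X <= d)%N, U *m V^T = X &
            r = (1 - theta p d) / theta p d * Omega_dropout U V]].

(* s is a (full, length n) list of singular values of X: the nonnegative
   square roots of the eigenvalues of X^T X, counted with multiplicity. *)
Definition is_singular_values (R : realType) (m n : nat) (X : 'M[R]_(m, n))
  (s : 'I_n -> R) : Prop :=
  (forall i, 0 <= s i) /\
  char_poly (X^T *m X) = \prod_(i < n) ('X - (s i ^+ 2)%:P).

Definition nuclear_norm (R : realType) (m n : nat) (X : 'M[R]_(m, n)) : R :=
  \sum_(i < n) (epsilon (inhabits (fun _ : 'I_n => (0 : R)))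
                        (is_singular_values X)) i.

Definition convex_fun (R : realType) (m n : nat) (g : 'M[R]_(m, n) -> R) : Prop :=
  forall (X Y : 'M[R]_(m, n)) (t : R), 0 <= t -> t <= 1 ->
    g (t *: X + (1 - t) *: Y) <= t * g X + (1 - t) * g Y.

Definition lower_convex_envelope (R : realType) (m n : nat)
  (f : 'M[R]_(m, n) -> R) (X : 'M[R]_(m, n)) : R :=
  sup [set y : R | exists g : 'M[R]_(m, n) -> R,
         [/\ convex_fun g, (forall Y, g Y <= f Y) & y = g X]].

(* Main.v *)
Require Import Defs.
From HB Require Import structures.
From Stdlib Require Import ClassicalEpsilon.
From mathcomp Require Import all_boot all_order all_algebra.
From mathcomp Require Import boolp classical_sets reals.
From mathcomp Require Import complex.
From mathcomp Require Import ring lra.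
Set Implicit Arguments. Unset Strict Implicit. Unset Printing Implicit Defensive.
Import Order.TTheory GRing.Theory Num.Theory.
Local Open Scope ring_scope.

Lemma char_poly_conj (F : fieldType) n (P A : 'M[F]_n) : P \in unitmx ->
  char_poly (invmx P *m A *m P) = char_poly A.
Proof.
move=> Pu; rewrite /char_poly.
have -> : char_poly_mx (invmx P *m A *m P) =
    map_mx polyC (invmx P) *m char_poly_mx A *m map_mx polyC P.
  rewrite /char_poly_mx mulmxBr mulmxBl !map_mxM; congr (_ - _).
  rewrite -mulmxA -scalar_mxC mulmxA -map_mxM mulVmx // map_mx1 mul1mx.
  by [].
rewrite !det_mulmx !det_map_mx mulrC mulrA -rmorphM /= -det_mulmx mulmxV //.
by rewrite det1 rmorph1 mul1r.
Qed.

Lemma sym_root (R : realType) n (A : 'M[R]_n.+1) : A^T = A ->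
  exists l, root (char_poly A) l.
Proof.
move=> Asym.
pose f := real_complex R.
pose Ac := map_mx f A.
have Acs : Ac \is symmetricmx.
  by apply/is_hermitianmxP; rewrite expr0 scale1r map_mx_id // /Ac map_trmx Asym.
have Acr : Ac \is a realmx.
  by apply/mxOverP => i j; rewrite mxE; apply/complex_realP; exists (A i j).
have := orthomx_spectralP (symmetric_normalmx Acs Acr).
have spr := hermitian_spectral_diag_real (realsym_hermsym Acs Acr).
set P := spectralmx Ac; set sp := spectral_diag Ac => Ae.
have cpe : char_poly Ac = \prod_(i < n.+1) ('X - (sp 0 i)%:P).
  rewrite Ae char_poly_conj ?spectral_unit // char_poly_trig ?diag_mx_is_trig //.
  by apply: eq_bigr => i _; rewrite mxE eqxx mulr1n.
have r0 : (sp 0 0) \is Num.real by exact: (mxOverP spr).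
exists (complex.Re (sp 0 0)).
apply/rootP; apply: (fmorph_inj f); rewrite rmorph0 -horner_map /=.
rewrite map_char_poly -/Ac cpe /f (RRe_real r0) horner_prod.
by rewrite big_ord_recl /= !hornerE subrr mul0r.
Qed.

Section Main.
Variable R : realType.

Lemma cs_sq d (a b : 'I_d -> R) :
  (\sum_k a k * b k) ^+ 2 <= (\sum_k a k ^+ 2) * (\sum_k b k ^+ 2).
Proof.
set A := \sum_k a k ^+ 2; set B := \sum_k b k ^+ 2; set C := \sum_k a k * b k.
have B0 : 0 <= B by apply: sumr_ge0 => i _; exact: sqr_ge0.
have E : \sum_k (a k * B - b k * C) ^+ 2 = B ^+ 2 * A - 2 * B * C * C + C ^+ 2 * B.
  rewrite (eq_bigr (fun i => B ^+ 2 * a i ^+ 2 - (2 * B * C) * (a i * b i)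
      + C ^+ 2 * b i ^+ 2)); last by move=> i _; ring.
  rewrite big_split /= sumrB -!mulr_sumr.
  by rewrite -/A -/B -/C; ring.
have : 0 <= \sum_k (a k * B - b k * C) ^+ 2 by apply: sumr_ge0 => i _; exact: sqr_ge0.
rewrite E; have [B00|Bp] := eqVneq B 0.
  have bz : forall k, b k = 0.
    move=> k; apply/eqP; rewrite -sqrf_eq0; apply/eqP.
    by apply: (psumr_eq0P (P := predT) (F := fun k => b k ^+ 2)) => // i _; exact: sqr_ge0.
  rewrite /C (eq_bigr (fun _ => 0)) ?big1 // => [|k _]; last by rewrite bz mulr0.
  by rewrite expr0n /= mulr_ge0 // sumr_ge0 // => i _; rewrite sqr_ge0.
have Bgt : 0 < B by rewrite lt_def Bp.
move=> h.
have : 0 <= B * (A * B - C ^+ 2) by rewrite (_ : B * _ = B ^+ 2 * A - 2 * B * C * C + C ^+ 2 * B) //; ring.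
by rewrite pmulr_rge0 // subr_ge0 mulrC.
Qed.
Lemma cs_sqrt d (a b : 'I_d -> R) :
  \sum_k a k * b k <= Num.sqrt (\sum_k a k ^+ 2) * Num.sqrt (\sum_k b k ^+ 2).
Proof.
rewrite -sqrtrM; last by apply: sumr_ge0 => i _; exact: sqr_ge0.
apply: le_trans (ler_norm _) _.
by rewrite -sqrtr_sqr ler_wsqrtr // cs_sq.
Qed.

Lemma cs_ones d (a : 'I_d -> R) :
  (\sum_k a k) ^+ 2 <= d%:R * \sum_k a k ^+ 2.
Proof.
have := cs_sq a (fun _ => 1).
have -> : \sum_k a k * 1 = \sum_k a k by apply: eq_bigr => k _; rewrite mulr1.
have -> : \sum_(k < d) 1 ^+ 2 = d%:R :> R.
  by rewrite (eq_bigr (fun _ => 1)) ?sumr_const ?card_ord // => k _; rewrite expr1n.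
by rewrite mulrC.
Qed.
Lemma trTT k (u v : 'cV[R]_k) : (u^T *m v) = (v^T *m u).
Proof. by rewrite [RHS]mx11_scalar -tr_scalar_mx -mx11_scalar trmx_mul trmxK. Qed.

Lemma dot_sum k (u : 'cV[R]_k) : (u^T *m u) 0 0 = \sum_i u i 0 ^+ 2.
Proof. by rewrite mxE; apply: eq_bigr => i _; rewrite mxE expr2. Qed.

Lemma dot0 k (u : 'cV[R]_k) : (u^T *m u) 0 0 = 0 -> u = 0.
Proof.
rewrite dot_sum => h; apply/matrixP => i j; rewrite ord1 mxE.
apply/eqP; rewrite -sqrf_eq0; apply/eqP.
by apply: (psumr_eq0P (P := predT) (F := fun i => u i 0 ^+ 2)) => // l _; exact: sqr_ge0.
Qed.

Lemma hh_alg k (W : 'M[R]_k.+1) c s : W *m W = s *: W -> c ^+ 2 * s = 2 * c ->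
  (1%:M - c *: W) *m (1%:M - c *: W) = 1%:M.
Proof.
move=> WW cs.
rewrite mulmxBl !mulmxBr !mul1mx ?mulmx1 -!scalemxAl -!scalemxAr WW !scalerA.
by rewrite -expr2 cs mulr_natl -scalerMnl mulr2n opprB addrK subrK.
Qed.

Lemma householder n (y : 'cV[R]_n.+1) : y^T *m y = 1%:M ->
  exists H : 'M[R]_n.+1, [/\ H^T = H, H *m H = 1%:M & H *m delta_mx 0 0 = y].
Proof.
move=> yy; pose e : 'cV[R]_n.+1 := delta_mx 0 0; rewrite -/e.
have ee : e^T *m e = 1%:M.
  by rewrite trmx_delta mul_delta_mx; apply/matrixP => i j; rewrite !ord1 !mxE.
set w := y - e; set s := (w^T *m w) 0 0; set c := 2 / s.
set t := (w^T *m e) 0 0.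
have wwE : w^T *m w = s%:M by rewrite [LHS]mx11_scalar.
have weE : w^T *m e = t%:M by rewrite [LHS]mx11_scalar.
have st : s = - 2 * t.
  rewrite /s /t /w !linearB /= !mulmxBl ?mulmxBr yy ee (trTT e y) !mxE.
  by rewrite ?eqxx /=; ring.
have cs : c ^+ 2 * s = 2 * c.
  rewrite /c; have [->|s0] := eqVneq s 0; first by rewrite invr0 !mulr0 ?expr0n /= ?mul0r.
  by field.
exists (1%:M - c *: (w *m w^T)); split.
- by rewrite linearB /= trmx1 linearZ /= trmx_mul trmxK.
- apply: hh_alg cs.
  by rewrite -mulmxA (mulmxA w^T) wwE mul_scalar_mx scalemxAr.
- rewrite mulmxBl mul1mx -scalemxAl -mulmxA weE mul_mx_scalar scalerA.
  have [t0|tn0] := eqVneq t 0.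
    have w0 : w = 0 by apply: dot0; rewrite -/s st t0 mulr0.
    by rewrite t0 mulr0 scale0r subr0; move/eqP: w0; rewrite subr_eq0 => /eqP ->.
  have -> : c * t = -1 by rewrite /c st; field; rewrite tn0.
  by rewrite scaleN1r opprK /w addrC subrK.
Qed.

Lemma eigvec n (A : 'M[R]_n.+1) : A^T = A ->
  exists l (y : 'cV[R]_n.+1), A *m y = l *: y /\ y^T *m y = 1%:M.
Proof.
move=> As; have [l rl] := sym_root As.
have : eigenvalue A l by rewrite eigenvalue_root_char.
case/eigenvalueP => v vA vn0.
pose s := (v^T^T *m v^T) 0 0.
have s0 : 0 <= s by rewrite /s dot_sum sumr_ge0 // => i _; exact: sqr_ge0.
have sn0 : s != 0.
  apply: contraNneq vn0 => /dot0 /(congr1 trmx); rewrite trmxK => ->.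
  by rewrite linear0.
exists l, ((Num.sqrt s)^-1 *: v^T); split.
  rewrite -scalemxAr -[A]As -trmx_mul vA linearZ /= scalerA mulrC -scalerA.
  by [].
rewrite [(_ *: v^T)^T]linearZ /= -scalemxAl -scalemxAr scalerA trmxK.
rewrite [v *m v^T]mx11_scalar (_ : (v *m v^T) 0 0 = s); last by rewrite /s trmxK.
rewrite scale_scalar_mx; congr (_%:M).
have sq : Num.sqrt s ^+ 2 = s by rewrite sqr_sqrtr.
have sqn0 : Num.sqrt s != 0 by rewrite sqrtr_eq0 -ltNge lt_def sn0.
move: sq sqn0; set q := Num.sqrt s => sq sqn0; rewrite -sq; field; exact: sqn0.
Qed.

Lemma RS n (A : 'M[R]_n) : A^T = A -> exists Q : 'M[R]_n,
  Q^T *m Q = 1%:M /\ (forall i j, i != j -> (Q^T *m A *m Q) i j = 0).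
Proof.
elim: n A => [|n IH] A As.
  by exists 1%:M; split; [rewrite trmx1 mulmx1 | case].
have [l [y [Ay yy]]] := eigvec As.
have [H [Hs HH He]] := householder yy.
pose B := H *m A *m H.
have Be : B *m (delta_mx 0 0 : 'cV_n.+1) = l *: delta_mx 0 0.
  rewrite /B -!mulmxA He Ay -scalemxAr -He mulmxA HH mul1mx.
  by [].
have Bs : B^T = B by rewrite /B !trmx_mul Hs As mulmxA.
have col0 : forall i : 'I_n.+1, B i 0 = l * (i == 0)%:R.
  move=> i; have := congr1 (fun M : 'cV[R]_n.+1 => M i 0) Be.
  by rewrite -colE !mxE eqxx andbT.
have BE : B = H *m A *m H by [].
clearbody B.
pose B1 : 'M[R]_(1 + n) := B.
have ur0 : ursubmx B1 = 0.
  apply/matrixP => i j; rewrite !mxE ord1 (_ : lshift n 0 = 0); last exact: val_inj.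
  rewrite /B1 -Bs mxE col0.
  by rewrite (_ : (rshift 1 j == 0) = false) ?mulr0 //.
have dl0 : dlsubmx B1 = 0.
  apply/matrixP => i j; rewrite !mxE ord1 (_ : lshift n 0 = 0); last exact: val_inj.
  rewrite /B1 col0.
  by rewrite (_ : (rshift 1 i == 0) = false) ?mulr0 //.
pose B' := drsubmx B1.
have B's : B'^T = B' by rewrite /B' trmx_drsub /B1 Bs.
have [Q' [Q'1 Q'd]] := IH B' B's.
pose K : 'M[R]_(1 + n) := block_mx 1%:M 0 0 Q'.
have KK : K^T *m K = 1%:M.
  rewrite /K tr_block_mx.
  rewrite mulmx_block !trmx0 !mulmx0 !mul0mx !addr0 !add0r trmx1 mulmx1 Q'1.
  by rewrite -scalar_mx_block.
exists (H *m K); split.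
  by rewrite trmx_mul mulmxA -(mulmxA K^T) Hs HH mulmx1 KK.
have -> : (H *m K)^T *m A *m (H *m K) = K^T *m B1 *m K.
  by rewrite trmx_mul Hs /B1 BE !mulmxA.
rewrite -(submxK B1) ur0 dl0 -/B' /K tr_block_mx !trmx0 trmx1.
rewrite !mulmx_block !mulmx0 !mul0mx !addr0 !add0r !mulmx1 !mul1mx.
move=> i j; case: (@split_ordP 1 n i) => i' -> {i}; case: (@split_ordP 1 n j) => j' -> {j}.
- by rewrite !ord1 eqxx.
- by rewrite (@block_mxEur _ 1 n 1 n) mul0mx mxE.
- by rewrite (@block_mxEdl _ 1 n 1 n) mxE.
- by rewrite (@block_mxEdr _ 1 n 1 n) => ij; apply: Q'd; apply: contraNneq ij => ->.
Qed.
Definition orthdiag m n (X : 'M[R]_(m, n)) (Q : 'M[R]_n) :=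
  [/\ Q^T *m Q = 1%:M, Q *m Q^T = 1%:M &
      forall i j, i != j -> ((X *m Q)^T *m (X *m Q)) i j = 0].

Lemma orthdiag_ex m n (X : 'M[R]_(m, n)) : exists Q, orthdiag X Q.
Proof.
have [|Q [Q1 Qd]] := @RS n (X^T *m X); first by rewrite trmx_mul trmxK.
exists Q; split => //; first exact: mulmx1C.
by move=> i j /Qd; rewrite trmx_mul !mulmxA.
Qed.

Definition dd m n (X : 'M[R]_(m, n)) (Q : 'M[R]_n) k :=
  ((X *m Q)^T *m (X *m Q)) k k.

Lemma dd_sum m n (X : 'M[R]_(m, n)) Q k :
  dd X Q k = \sum_i (X *m Q) i k ^+ 2.
Proof. by rewrite /dd mxE; apply: eq_bigr => i _; rewrite mxE expr2. Qed.

Lemma dd_ge0 m n (X : 'M[R]_(m, n)) Q k : 0 <= dd X Q k.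
Proof. by rewrite dd_sum sumr_ge0 // => i _; exact: sqr_ge0. Qed.

Lemma orthdiag_diag m n (X : 'M[R]_(m, n)) Q : orthdiag X Q ->
  (X *m Q)^T *m (X *m Q) = diag_mx (\row_k dd X Q k).
Proof.
case=> _ _ Qd; apply/matrixP => i j; rewrite [RHS]mxE [in RHS]mxE.
by have [<-|/Qd ->] := eqVneq i j; rewrite ?mulr1n ?mulr0n.
Qed.

Lemma nuclear_normE m n (X : 'M[R]_(m, n)) Q : orthdiag X Q ->
  nuclear_norm X = \sum_k Num.sqrt (dd X Q k).
Proof.
move=> oQ; have [Q1 Q1' Qd] := oQ.
have cpE : char_poly (X^T *m X) = \prod_(k < n) ('X - (dd X Q k)%:P).
  have Qu : Q \in unitmx by case: (mulmx1_unit Q1').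
  have iQ : invmx Q = Q^T.
    by rewrite -[invmx Q]mulmx1 -Q1' mulmxA mulVmx // mul1mx.
  rewrite -(char_poly_conj _ Qu) iQ.
  have -> : Q^T *m (X^T *m X) *m Q = (X *m Q)^T *m (X *m Q).
    by rewrite trmx_mul !mulmxA.
  rewrite orthdiag_diag // char_poly_trig ?diag_mx_is_trig //.
  by apply: eq_bigr => k _; rewrite !mxE eqxx mulr1n.
have sv : is_singular_values X (fun k => Num.sqrt (dd X Q k)).
  split=> [k|]; first exact: sqrtr_ge0.
  by rewrite cpE; apply: eq_bigr => k _; rewrite sqr_sqrtr // dd_ge0.
rewrite /nuclear_norm.
set e := epsilon _ _.
have [e0 ecp] : is_singular_values X e by apply: epsilon_spec; exists (fun k => Num.sqrt (dd X Q k)).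
have pe : perm_eq [seq e k ^+ 2 | k <- index_enum 'I_n] [seq dd X Q k | k <- index_enum 'I_n].
  apply: prod_XsubC_eq; rewrite !big_map -ecp.
  by rewrite cpE.
rewrite (eq_bigr (fun k => Num.sqrt (e k ^+ 2))); last first.
  by move=> k _; rewrite sqrtr_sqr ger0_norm.
rewrite -(big_map (fun k => e k ^+ 2) predT (fun x => Num.sqrt x)).
rewrite (perm_big _ pe) big_map.
by [].
Qed.

Definition cn m d (U : 'M[R]_(m, d)) k := Num.sqrt (\sum_i U i k ^+ 2).
Definition cost m n d (U : 'M[R]_(m, d)) (V : 'M[R]_(n, d)) :=
  \sum_k cn U k * cn V k.

Lemma gram_kk a d (M : 'M[R]_(a, d)) k : (M^T *m M) k k = \sum_i M i k ^+ 2.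
Proof. by rewrite mxE; apply: eq_bigr => i _; rewrite mxE expr2. Qed.

Lemma cn_ge0 m d (U : 'M[R]_(m, d)) k : 0 <= cn U k.
Proof. exact: sqrtr_ge0. Qed.

Lemma diag_mul n (a b : 'rV[R]_n) :
  diag_mx a *m diag_mx b = diag_mx (\row_k (a 0 k * b 0 k)).
Proof.
apply/matrixP => i j; rewrite mul_diag_mx !mxE.
by have [->|_] := eqVneq i j; rewrite ?mulr1n ?mulr0n ?mulr0.
Qed.

Lemma F2 m n (X : 'M[R]_(m, n)) Q : orthdiag X Q ->
  (X *m Q) *m Q^T = X /\ cost (X *m Q) Q = nuclear_norm X.
Proof.
move=> oQ; have [Q1 Q1' Qd] := oQ; split; first by rewrite -mulmxA Q1' mulmx1.
rewrite (nuclear_normE oQ) /cost; apply: eq_bigr => k _.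
rewrite /cn -(gram_kk Q) Q1 mxE eqxx mulr1n sqrtr1 mulr1.
by rewrite dd_sum.
Qed.

Lemma qinv1 (q : R) : q^-1 * q ^+ 2 = q.
Proof. by have [->|q0] := eqVneq q 0; [rewrite invr0 mul0r | field]. Qed.

Lemma qinv2 (q : R) : q^-1 * (q^-1 * q ^+ 2 * q^-1) = q^-1.
Proof. by have [->|q0] := eqVneq q 0; [rewrite invr0 !mul0r | field]. Qed.

Lemma F3 m n d (X : 'M[R]_(m, n)) Q (U : 'M[R]_(m, d)) V : orthdiag X Q ->
  U *m V^T = X -> \sum_k Num.sqrt (dd X Q k) <= cost U V.
Proof.
move=> oQ UV; have [Q1 Q1' Qd] := oQ.
set G := X *m Q.
pose q := \row_k Num.sqrt (dd X Q k).
pose t := \row_k (Num.sqrt (dd X Q k))^-1.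
have GG : G^T *m G = diag_mx (\row_k (q 0 k ^+ 2)).
  rewrite orthdiag_diag //; congr diag_mx; apply/rowP => k; rewrite !mxE.
  by rewrite sqr_sqrtr // dd_ge0.
pose W := G *m diag_mx t.
have WG : W^T *m G = diag_mx q.
  rewrite /W trmx_mul tr_diag_mx -mulmxA GG diag_mul; congr diag_mx.
  by apply/rowP => k; rewrite !mxE qinv1.
have WW : W^T *m W = diag_mx (\row_k (t 0 k * q 0 k ^+ 2 * t 0 k)).
  rewrite {2}/W mulmxA WG diag_mul; congr diag_mx.
  by apply/rowP => k; rewrite !mxE qinv1.
have WWW : W *m (W^T *m W) = W.
  rewrite WW /W -mulmxA diag_mul; congr (_ *m diag_mx _).
  by apply/rowP => k; rewrite !mxE qinv2.
pose P := W *m W^T.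
have PT : P^T = P by rewrite /P trmx_mul trmxK.
have PP : P *m P = P by rewrite /P mulmxA -(mulmxA W) WWW.
pose al := W^T *m U; pose be := Q^T *m V.
have trE : \sum_k Num.sqrt (dd X Q k) = \sum_k \sum_i al i k * be i k.
  have -> : \sum_k Num.sqrt (dd X Q k) = \tr (W^T *m X *m Q).
    rewrite -mulmxA -/G WG mxtrace_diag; apply: eq_bigr => k _; rewrite mxE.
    by [].
  rewrite -UV (_ : W^T *m (U *m V^T) *m Q = al *m be^T); last first.
    by rewrite /al /be [(Q^T *m V)^T]trmx_mul trmxK !mulmxA.
  transitivity (\sum_j \sum_k al j k * be j k); last exact: exchange_big.
  rewrite /mxtrace; apply: eq_bigr => j _; rewrite mxE.
  by apply: eq_bigr => k _; rewrite [be^T _ _]mxE.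
rewrite trE /cost; apply: ler_sum => k _.
apply: le_trans (cs_sqrt (fun i => al i k) (fun i => be i k)) _.
have beE : \sum_i be i k ^+ 2 = \sum_j V j k ^+ 2.
  rewrite -!gram_kk /be trmx_mul trmxK mulmxA -(mulmxA V^T) Q1' mulmx1.
  by [].
have alE : \sum_i al i k ^+ 2 <= \sum_j U j k ^+ 2.
  rewrite -!gram_kk.
  pose r := (1%:M - P) *m U.
  have : 0 <= (r^T *m r) k k by rewrite gram_kk sumr_ge0 // => i _; exact: sqr_ge0.
  have -> : r^T *m r = U^T *m U - al^T *m al.
    have IPP : (1%:M - P) *m (1%:M - P) = 1%:M - P.
      by rewrite mulmxBl mul1mx !mulmxBr mulmx1 PP subrr subr0.
    rewrite /r [((1%:M - P) *m U)^T]trmx_mul linearB /= trmx1 PT.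
    rewrite -mulmxA (mulmxA (1%:M - P)) IPP mulmxBl mul1mx mulmxBr.
    by rewrite /al [(W^T *m U)^T]trmx_mul trmxK /P !mulmxA.
  have -> : (U^T *m U - al^T *m al) k k = (U^T *m U) k k - (al^T *m al) k k.
    by rewrite !mxE.
  by rewrite subr_ge0.
rewrite /cn beE ler_wpM2r ?sqrtr_ge0 //.
by rewrite ler_wsqrtr.
Qed.

Lemma nuclear_norm_ge0 m n (X : 'M[R]_(m, n)) : 0 <= nuclear_norm X.
Proof.
have [Q oQ] := orthdiag_ex X; rewrite (nuclear_normE oQ).
by apply: sumr_ge0 => k _; exact: sqrtr_ge0.
Qed.

Lemma nuclear_le_cost m n d (X : 'M[R]_(m, n)) (U : 'M[R]_(m, d)) V :
  U *m V^T = X -> nuclear_norm X <= cost U V.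
Proof.
have [Q oQ] := orthdiag_ex X; rewrite (nuclear_normE oQ); exact: F3.
Qed.

Lemma cost_ge0 m n d (U : 'M[R]_(m, d)) (V : 'M[R]_(n, d)) : 0 <= cost U V.
Proof. by apply: sumr_ge0 => k _; rewrite mulr_ge0 // cn_ge0. Qed.

Lemma OmegaE m n d (U : 'M[R]_(m, d)) (V : 'M[R]_(n, d)) :
  Omega_dropout U V = \sum_k (cn U k * cn V k) ^+ 2.
Proof.
apply: eq_bigr => k _; rewrite exprMn /cn !sqr_sqrtr //.
  by apply: sumr_ge0 => i _; exact: sqr_ge0.
by apply: sumr_ge0 => i _; exact: sqr_ge0.
Qed.

Lemma cn_scale m d (a : R) (U : 'M[R]_(m, d)) k : 0 <= a ->
  cn (a *: U) k = a * cn U k.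
Proof.
move=> a0; rewrite /cn (eq_bigr (fun i => a ^+ 2 * U i k ^+ 2)); last first.
  by move=> i _; rewrite mxE exprMn.
rewrite -mulr_sumr sqrtrM ?sqr_ge0 // sqrtr_sqr ger0_norm //.
Qed.

Lemma cn_row_l m d1 d2 (A : 'M[R]_(m, d1)) (B : 'M[R]_(m, d2)) k :
  cn (row_mx A B) (lshift d2 k) = cn A k.
Proof. by rewrite /cn; congr Num.sqrt; apply: eq_bigr => i _; rewrite row_mxEl. Qed.

Lemma cn_row_r m d1 d2 (A : 'M[R]_(m, d1)) (B : 'M[R]_(m, d2)) k :
  cn (row_mx A B) (rshift d1 k) = cn B k.
Proof. by rewrite /cn; congr Num.sqrt; apply: eq_bigr => i _; rewrite row_mxEr. Qed.

Lemma nuclear_convex m n (X Y : 'M[R]_(m, n)) (t : R) : 0 <= t -> t <= 1 ->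
  nuclear_norm (t *: X + (1 - t) *: Y) <=
  t * nuclear_norm X + (1 - t) * nuclear_norm Y.
Proof.
move=> t0 t1; have t1' : 0 <= 1 - t by rewrite subr_ge0.
have [Q1 o1] := orthdiag_ex X; have [Q2 o2] := orthdiag_ex Y.
have [e1 c1] := F2 o1; have [e2 c2] := F2 o2.
pose U := row_mx (t *: (X *m Q1)) ((1 - t) *: (Y *m Q2)).
pose V := row_mx Q1 Q2.
have UV : U *m V^T = t *: X + (1 - t) *: Y.
  by rewrite /U /V tr_row_mx mul_row_col -!scalemxAl e1 e2.
apply: le_trans (nuclear_le_cost UV) _.
rewrite /cost big_split_ord /=.
rewrite -c1 -c2 /cost !mulr_sumr; apply: lerD; apply: ler_sum => k _.
  by rewrite /U /V cn_row_l cn_row_l cn_scale // mulrA.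
by rewrite /U /V cn_row_r cn_row_r cn_scale // mulrA.
Qed.

Lemma jensen m n (g : 'M[R]_(m, n) -> R) : convex_fun g ->
  forall d (t : 'I_d -> R) (Y : 'I_d -> 'M[R]_(m, n)),
  (forall k, 0 <= t k) -> \sum_k t k = 1 ->
  g (\sum_k t k *: Y k) <= \sum_k t k * g (Y k).
Proof.
move=> gc; elim=> [|d IH] t Y t0 t1.
  by move: t1; rewrite big_ord0 => /eqP; rewrite eq_sym oner_eq0.
move: t1; rewrite !big_ord_recr /=.
set T := \sum_(k < d) t (widen_ord (leqnSn d) k) => t1.
have T0 : 0 <= T by apply: sumr_ge0 => k _.
have [T00|Tn0] := eqVneq T 0.
  have tz : forall k : 'I_d, t (widen_ord (leqnSn d) k) = 0.
    by move=> k; apply: (psumr_eq0P (P := predT)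
       (F := fun k => t (widen_ord (leqnSn d) k))) => // i _.
  rewrite !big1 ?add0r => [|k _|k _]; last 2 first.
  - by rewrite tz mul0r.
  - by rewrite tz scale0r.
  by move: t1; rewrite T00 add0r => ->; rewrite scale1r mul1r.
have Tp : 0 < T by rewrite lt_def Tn0.
pose t' k := t (widen_ord (leqnSn d) k) / T.
have t'0 : forall k, 0 <= t' k by move=> k; rewrite divr_ge0.
have t'1 : \sum_k t' k = 1 by rewrite -mulr_suml -/T divff.
have sE : t ord_max = 1 - T by rewrite -t1 (addrC T) addrK.
have -> : \sum_(i < d) t (widen_ord (leqnSn d) i) *: Y (widen_ord (leqnSn d) i) =
    T *: \sum_k t' k *: Y (widen_ord (leqnSn d) k).
  rewrite scaler_sumr; apply: eq_bigr => k _; by rewrite scalerA /t' mulrCA divff // mulr1.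
rewrite sE.
apply: le_trans (gc _ _ _ T0 _) _; first by rewrite -t1 lerDl.
rewrite lerD2r.
have := IH t' (fun k => Y (widen_ord (leqnSn d) k)) t'0 t'1.
move/(ler_wpM2l T0) => /le_trans; apply.
rewrite mulr_sumr; apply: ler_sum => k _; by rewrite mulrA /t' mulrCA divff // mulr1.
Qed.

Lemma col_sum m n d (U : 'M[R]_(m, d)) (V : 'M[R]_(n, d)) :
  U *m V^T = \sum_k col k U *m (col k V)^T.
Proof.
apply/matrixP => i j; rewrite summxE mxE; apply: eq_bigr => k _.
by rewrite !mxE big_ord1 !mxE.
Qed.

Section Lam.
Variables (p : R) (hp0 : 0 < p) (hp1 : p < 1).
Let c := (1 - p) / p.

Lemma c_ge0 : 0 <= c.
Proof. by rewrite /c divr_ge0 // ?subr_ge0 ?ltW. Qed.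

Lemma theta_ratio d : (0 < d)%N ->
  (1 - theta p d) / theta p d = d%:R * c.
Proof.
case: d => // d _; rewrite /theta /c /= -natr1.
have D0 : d%:R + 1 - d%:R * p != 0.
  rewrite (_ : d%:R + 1 - d%:R * p = d%:R * (1 - p) + 1); last by ring.
  rewrite gt_eqF // ltr_pwDr // mulr_ge0 // subr_ge0 ltW //.
have p0 : p != 0 by rewrite gt_eqF.
by field; rewrite D0 p0.
Qed.

Lemma Lam_elem_ge0 m n d (U : 'M[R]_(m, d)) (V : 'M[R]_(n, d)) : (0 < d)%N ->
  0 <= (1 - theta p d) / theta p d * Omega_dropout U V.
Proof.
move=> d0; rewrite theta_ratio // OmegaE; apply: mulr_ge0.
  by apply: mulr_ge0 => //; exact: c_ge0.
by apply: sumr_ge0 => k _; exact: sqr_ge0.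
Qed.

Lemma Lam_lbound m n (Y : 'M[R]_(m, n)) (r : R) :
  (exists (d : nat) (U : 'M[R]_(m, d)) (V : 'M[R]_(n, d)),
        [/\ (0 < d)%N, (\rank Y <= d)%N, U *m V^T = Y &
            r = (1 - theta p d) / theta p d * Omega_dropout U V]) -> 0 <= r.
Proof. by move=> [d [U [V [d0 _ _ ->]]]]; exact: Lam_elem_ge0. Qed.

Lemma Lam_lb m n (Y : 'M[R]_(m, n)) : c * nuclear_norm Y ^+ 2 <= Lambda p Y.
Proof.
rewrite /Lambda; apply: lb_le_inf.
  exists ((1 - theta p (n + 1)) / theta p (n + 1) *
          Omega_dropout (row_mx Y (0 : 'M_(m, 1))) (row_mx (1%:M : 'M_n) 0)).
  exists (n + 1)%N, (row_mx Y 0), (row_mx 1%:M 0); split => //.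
  - by rewrite addn1.
  - by apply: leq_trans (rank_leq_col Y) _; rewrite leq_addr.
  - by rewrite tr_row_mx mul_row_col trmx1 mulmx1 trmx0 mulmx0 addr0.
move=> r [d [U [V [d0 _ UV ->]]]].
rewrite theta_ratio // OmegaE.
have N0 := nuclear_norm_ge0 Y.
have NC := nuclear_le_cost UV.
have := cs_ones (fun k => cn U k * cn V k); rewrite -/(cost U V) => h.
have -> : d%:R * c * \sum_k (cn U k * cn V k) ^+ 2 = c * (d%:R * \sum_k (cn U k * cn V k) ^+ 2) by ring.
apply: ler_wpM2l; first exact: c_ge0.
apply: le_trans _ h; rewrite ler_sqr ?nnegrE //.
exact: cost_ge0.
Qed.

Lemma Lam_ub1 m n (U : 'M[R]_(m, 1)) (V : 'M[R]_(n, 1)) :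
  Lambda p (U *m V^T) <= c * Omega_dropout U V.
Proof.
rewrite /Lambda; set E := (X in inf X).
have hE : has_lbound E by exists 0 => r; exact: Lam_lbound.
apply: (ge_inf hE).
exists 1%N, U, V; split => //.
  by apply: leq_trans (mxrankM_maxl _ _) (rank_leq_col _).
by rewrite theta_ratio // mul1r.
Qed.
End Lam.

End Main.

Theorem proposition2 (R : realType) (p : R) (hp0 : 0 < p) (hp1 : p < 1)
  (m n : nat) (X : 'M[R]_(m, n)) :
  lower_convex_envelope (@Lambda R p m n) X = (1 - p) / p * nuclear_norm X ^+ 2.
Proof.
set c := (1 - p) / p.
have c0 : 0 <= c := c_ge0 hp0 hp1.
pose f := fun Y : 'M[R]_(m, n) => c * nuclear_norm Y ^+ 2.
have fconv : convex_fun f.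
  move=> Y Z t t0 t1; rewrite /f.
  have h := nuclear_convex Y Z t0 t1.
  have N0 := nuclear_norm_ge0 (t *: Y + (1 - t) *: Z).
  have NY := nuclear_norm_ge0 Y; have NZ := nuclear_norm_ge0 Z.
  move: h N0 NY NZ.
  set a := nuclear_norm Y; set b := nuclear_norm Z; set z := nuclear_norm _.
  move=> h N0 NY NZ.
  have t1' : 0 <= 1 - t by rewrite subr_ge0.
  have h2 : z ^+ 2 <= (t * a + (1 - t) * b) ^+ 2.
    by rewrite ler_sqr ?nnegrE // addr_ge0 // mulr_ge0.
  have h3 : (t * a + (1 - t) * b) ^+ 2 <= t * a ^+ 2 + (1 - t) * b ^+ 2.
    rewrite -subr_ge0.
    have -> : t * a ^+ 2 + (1 - t) * b ^+ 2 - (t * a + (1 - t) * b) ^+ 2 =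
              t * (1 - t) * (a - b) ^+ 2 by ring.
    by apply: mulr_ge0; [apply: mulr_ge0 | exact: sqr_ge0].
  have -> : t * (c * a ^+ 2) + (1 - t) * (c * b ^+ 2) =
            c * (t * a ^+ 2 + (1 - t) * b ^+ 2) by ring.
  by apply: ler_wpM2l => //; apply: le_trans h2 h3.
have fle : forall Y, f Y <= Lambda p Y by move=> Y; exact: Lam_lb.
rewrite /lower_convex_envelope; set E := (Z in sup Z).
have fE : E (f X) by exists f.
have ub : ubound E (f X).
  move=> y [g [gc gle ->]].
  have [Q oQ] := orthdiag_ex X; have [Q1 Q1' Qd] := oQ.
  have [eX cX] := F2 oQ.
  set G := X *m Q in eX cX.
  pose a k := cn G k.
  have q2 : forall k, \sum_j Q j k ^+ 2 = 1.
    by move=> k; rewrite -gram_kk Q1 mxE eqxx.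
  have cQ : forall k, cn Q k = 1 by move=> k; rewrite /cn q2 sqrtr1.
  have a0 : forall k, 0 <= a k by move=> k; exact: cn_ge0.
  have ak2 : forall k, a k ^+ 2 = \sum_i G i k ^+ 2.
    by move=> k; rewrite sqr_sqrtr // sumr_ge0 // => i _; exact: sqr_ge0.
  have colz : forall k, a k = 0 -> col k G = 0.
    move=> k ak; apply/matrixP => i j; rewrite [LHS]mxE [RHS]mxE.
    apply/eqP; rewrite -sqrf_eq0; apply/eqP.
    apply: (psumr_eq0P (P := predT) (F := fun i => G i k ^+ 2)) => //.
      by move=> l _; exact: sqr_ge0.
    by rewrite -ak2 ak expr0n.
  have Sdef : nuclear_norm X = \sum_k a k.
    by rewrite -cX /cost; apply: eq_bigr => k _; rewrite cQ mulr1.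
  have Xsum : X = \sum_k col k G *m (col k Q)^T by rewrite -col_sum eX.
  have Om : forall k (al : R),
      Omega_dropout (al *: col k G) (col k Q) = al ^+ 2 * a k ^+ 2.
    move=> k al; rewrite /Omega_dropout big_ord1.
    rewrite (eq_bigr (fun j => Q j k ^+ 2)); last by move=> j _; rewrite !mxE.
    rewrite q2 mulr1 ak2 mulr_sumr; apply: eq_bigr => i _.
    by rewrite !mxE exprMn.
  have gY : forall k al,
      g (al *: (col k G *m (col k Q)^T)) <= c * (al ^+ 2 * a k ^+ 2).
    move=> k al; apply: le_trans (gle _) _.
    by rewrite scalemxAl -Om; exact: Lam_ub1.
  rewrite /f; set S := nuclear_norm X in Sdef *.
  have [S0|Sn0] := eqVneq S 0.
    have az : forall k, a k = 0.
      move=> k; apply: (psumr_eq0P (P := predT) (F := a)) => //.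
      by rewrite -Sdef.
    rewrite S0 expr0n mulr0 /=.
    apply: le_trans (gle X) _.
    have -> : X = (0 : 'M[R]_(m, 1)) *m (0 : 'M[R]_(n, 1))^T.
      by rewrite mul0mx Xsum big1 // => k _; rewrite colz // mul0mx.
    apply: le_trans (Lam_ub1 hp0 hp1 _ _) _.
    rewrite /Omega_dropout big1 ?mulr0 // => k _.
    by rewrite big1 ?mul0r // => i _; rewrite mxE expr0n.
  have Sp : 0 < S by rewrite lt_def Sn0 Sdef sumr_ge0.
  pose t k := a k / S.
  pose Y k := (S / a k) *: (col k G *m (col k Q)^T).
  have t0 : forall k, 0 <= t k by move=> k; rewrite divr_ge0 // ltW.
  have t1 : \sum_k t k = 1 by rewrite -mulr_suml -Sdef divff.
  have XE : X = \sum_k t k *: Y k.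
    rewrite {1}Xsum; apply: eq_bigr => k _; rewrite /t /Y scalerA.
    have [ak|akn] := eqVneq (a k) 0; first by rewrite colz // mul0mx scaler0.
    by rewrite (_ : a k / S * (S / a k) = 1) ?scale1r //; field; rewrite akn Sn0.
  rewrite {1}XE; apply: le_trans (jensen gc Y t0 t1) _.
  apply: (@le_trans _ _ (\sum_k c * S * a k)).
    apply: ler_sum => k _.
    apply: le_trans (ler_wpM2l (t0 k) (gY k (S / a k))) _.
    have [ak|akn] := eqVneq (a k) 0; first by rewrite /t ak !mul0r mulr0.
    have -> : t k * (c * ((S / a k) ^+ 2 * a k ^+ 2)) = c * S * a k by rewrite /t; field; rewrite akn Sn0.
    by [].
  by rewrite -mulr_sumr -Sdef expr2 mulrA.
apply/eqP; rewrite eq_le; apply/andP; split.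
  by apply: ge_sup => //; exists (f X).
have hs : has_sup E by split; exists (f X).
exact: (sup_upper_bound hs).
Qed.
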